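(* The sequential specification $\mathsf{Register}$, defined by the ordered rules $R_0, R_{WR}$, is step-by-step linearizable: for every differentiated history $h$ and every data value $x$, (1) if $h\sqsubseteq u$ for some $u\in M_x(R_0)$ and $h\setminus x\sqsubseteq[\![R_0]\!]$, then $h\sqsubseteq[\![R_0]\!]$; and (2) if $h\sqsubseteq u$ for some $u\in M_x(R_{WR})$ and $h\setminus x\sqsubseteq [\![R_0,R_{WR}]\!]$, then $h\sqsubseteq[\![R_0,R_{WR}]\!]$.
   Context: Data values are natural numbers. Operations (resp. method events) are pairs of a method in $\{Write, Read\}$ and a data value ($Read(x)$ returns $x$). A history $h$ is a finite set of operations with a strict partial order $<_{hb}$ (happens-before) that is an interval order (if $o_1<_{hb}o_2$ and $o_3<_{hb}o_4$ then $o_1<_{hb}o_4$ or $o_3<_{hb}o_2$). A sequential execution is a finite sequence of method events. $h$ is differentiated if each data value is carried by at most one $Write$ operation. $h\sqsubseteq u$ means there is a bijection between operations of $h$ and positions of $u$ preserving method and data value such that $o_1<_{hb}o_2$ implies the image of $o_1$ precedes that of $o_2$; $h\sqsubseteq S$ means $h\sqsubseteq u$ for some $u\in S$. $h\setminus x$ removes all operations with data value $x$. Rules: $R_0$: $\epsilon\in\mathsf{Register}$; $R_{WR}$: $u\in\mathsf{Register}\Rightarrow Write(x)\cdot Read(x)^*\cdot u\in\mathsf{Register}$ ($x$ not occurring in $u$). $[\![R_0]\!]=\{\epsilon\}$ and $[\![R_0,R_{WR}]\!]=\mathsf{Register}$ is the smallest set closed under both rules. Matching sets with witness $x$: $M_x(R_0)=\{\epsilon\}$;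 $M_x(R_{WR})$ = sequences $Write(x)\cdot Read(x)^k\cdot u$, $k\ge 0$, with $x$ not occurring in $u$. *)

(* Defs.v *)
From HB Require Import structures.
From mathcomp Require Import all_boot.
Set Implicit Arguments. Unset Strict Implicit. Unset Printing Implicit Defensive.

Inductive method := Write | Read.
Definition method_eqb (m1 m2 : method) : bool :=
  match m1, m2 with Write, Write | Read, Read => true | _, _ => false end.
Lemma method_eqP : Equality.axiom method_eqb.
Proof. by case; case; constructor. Qed.
HB.instance Definition _ := hasDecEq.Build method method_eqP.

Definition event := (method * nat)%type.
Definition meth (e : event) : method := e.1.
Definition dval (e : event) : nat := e.2.

Definition seqexec := seq event.

(* A history: a finite set of operations (the carrier, so that several
   operations may carry the same label), each labelled by a method event,
   with a happens-before relation. *)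
Record history := History {
  op : finType;
  lab : op -> event;
  hb : rel op
}.
Arguments lab : clear implicits.
Arguments hb : clear implicits.

(* Well-formedness: hb is a strict partial order which is an interval order. *)
Definition is_history (h : history) : Prop :=
  (forall o, ~~ hb h o o) /\
  (forall o1 o2 o3, hb h o1 o2 -> hb h o2 o3 -> hb h o1 o3) /\
  (forall o1 o2 o3 o4, hb h o1 o2 -> hb h o3 o4 -> hb h o1 o4 || hb h o3 o2).

Definition differentiated (h : history) : Prop :=
  forall (o1 o2 : op h) (v : nat),
    lab h o1 = (Write, v) -> lab h o2 = (Write, v) -> o1 = o2.

Definition hsub (h : history) (u : seqexec) : Prop :=
  exists f : op h -> 'I_(size u),
    bijective f /\
    (forall o, nth (Write, 0) u (f o) = lab h o) /\
    (forall o1 o2, hb h o1 o2 -> f o1 < f o2).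

Definition hsubS (h : history) (S : seqexec -> Prop) : Prop :=
  exists u, S u /\ hsub h u.

Definition hremove (h : history) (x : nat) : history :=
  @History {o : op h | dval (lab h o) != x}
           (fun o => lab h (val o))
           (fun o1 o2 => hb h (val o1) (val o2)).

Definition occurs (x : nat) (u : seqexec) : bool := x \in map dval u.

Definition Sem_R0 (u : seqexec) : Prop := u = [::].

Inductive Register : seqexec -> Prop :=
| Reg_R0 : Register [::]
| Reg_RWR (x k : nat) (u : seqexec) :
    Register u -> ~~ occurs x u ->
    Register ((Write, x) :: nseq k (Read, x) ++ u).

Definition M_R0 (x : nat) (u : seqexec) : Prop := u = [::].
Definition M_RWR (x : nat) (u : seqexec) : Prop :=
  exists (k : nat) (v : seqexec),
    u = (Write, x) :: nseq k (Read, x) ++ v /\ ~~ occurs x v.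

(* Main.v *)
Require Import Defs.
From mathcomp Require Import all_boot.

Lemma nth_pre (d : event) (x k : nat) (s : seq event) i :
  i < k.+1 ->
  nth d ((Write, x) :: nseq k (Read, x) ++ s) i =
  nth d ((Write, x) :: nseq k (Read, x)) i.
Proof.
by move=> hi; rewrite -cat_cons nth_cat /= size_nseq hi.
Qed.

Lemma dval_pre (d : event) (x k : nat) i :
  i < k.+1 -> dval (nth d ((Write, x) :: nseq k (Read, x)) i) = x.
Proof. by case: i => //= i hi; rewrite nth_nseq -ltnS hi. Qed.

Lemma nth_post (d : event) (x k : nat) (s : seq event) j :
  nth d ((Write, x) :: nseq k (Read, x) ++ s) (k.+1 + j) = nth d s j.
Proof.
by rewrite -cat_cons nth_cat /= size_nseq ltnNge leq_addr /= addKn.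
Qed.

Theorem mainTheorem2 (h : history) (x : nat) :
  is_history h -> differentiated h ->
  ((exists u, M_R0 x u /\ hsub h u) ->
     hsubS (hremove h x) Sem_R0 -> hsubS h Sem_R0)
  /\
  ((exists u, M_RWR x u /\ hsub h u) ->
     hsubS (hremove h x) Register -> hsubS h Register).
Proof.
move=> _ _; split.
  move=> [u [-> Hu]] _; by exists [::].
move=> [u [[k [v [-> Hv]]] [f [fbij [flab fhb]]]]].
move=> [w [Hw [f' [f'bij [f'lab f'hb]]]]].
set P := fun o : op h => dval (lab h o) != x.
have A : forall o, ~~ P o -> f o < k.+1.
  move=> o; rewrite /P negbK => /eqP Ho; rewrite ltnNge; apply/negP => Hle.
  move: (flab o) (ltn_ord (f o)) Hle; move: (f o : nat) => i.
  rewrite -cat_cons nth_cat /= size_nseq ltnNge => E H Hle; move: E; rewrite Hle /=.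
  move=> E; move/negP: Hv; apply; rewrite /occurs -Ho -E.
  apply: map_f; apply: mem_nth.
  move: H; rewrite /= size_cat size_nseq => H.
  by rewrite ltn_subLR // addSn.
have B : forall o, f o < k.+1 -> ~~ P o.
  move=> o Hf; rewrite /P negbK -(flab o).
  move: (f o : nat) Hf => i Hf; rewrite nth_pre //.
  by rewrite dval_pre.
have occ : ~~ occurs x w.
  apply/negP; rewrite /occurs => /mapP [y yin Hy].
  have Hi : index y w < size w by rewrite index_mem.
  have [g' _ g'K] := f'bij.
  have := f'lab (g' (Ordinal Hi)).
  rewrite g'K /= nth_index // => E.
  have := valP (g' (Ordinal Hi)); rewrite -E -Hy.
  by rewrite eqxx.
set u' := (Write, x) :: nseq k (Read, x) ++ w.
exists u'; split; first exact: Reg_RWR.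
pose gn (o : op h) : nat :=
  match (insub o : option (op (hremove h x))) with
  | Some o' => k.+1 + f' o' | None => f o end.
have gnE1 : forall o, ~~ P o -> gn o = f o.
  by move=> o Ho; rewrite /gn insubN.
have gnE2 : forall o' : op (hremove h x), gn (val o') = k.+1 + f' o'.
  by move=> o'; rewrite /gn valK.
have Nsz : size u' = (k + size w).+1.
  by rewrite /u' /= size_cat size_nseq.
have gbound : forall o, gn o < (k + size w).+1.
  move=> o; case: (boolP (P o)) => Ho.
    rewrite -[o]/(val (exist _ o Ho : op (hremove h x))) gnE2.
    by rewrite addSn ltnS ltn_add2l.
  rewrite gnE1 //; apply: leq_trans (A _ Ho) _; by rewrite ltnS leq_addr.
pose g (o : op h) : 'I_(size u') := @inord (size (nseq k (Read, x) ++ w)) (gn o).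
have gval : forall o, (g o : nat) = gn o.
  move=> o; rewrite /g inordK //; have := gbound o; rewrite -Nsz; exact.
have ginj : injective g.
  move=> o1 o2 E; have {E} : gn o1 = gn o2 by rewrite -!gval E.
  case: (boolP (P o1)) => H1; case: (boolP (P o2)) => H2.
  - rewrite -[o1]/(val (exist _ o1 H1 : op (hremove h x))).
    rewrite -[o2]/(val (exist _ o2 H2 : op (hremove h x))) !gnE2.
    move/addnI/val_inj/(bij_inj f'bij) => E.
    by have := congr1 val E.
  - rewrite -[o1]/(val (exist _ o1 H1 : op (hremove h x))) gnE2 gnE1 //.
    move=> E; have := A _ H2; by rewrite -E ltnNge leq_addr.
  - rewrite -[o2]/(val (exist _ o2 H2 : op (hremove h x))) gnE2 gnE1 //.
    move=> E; have := A _ H1; by rewrite E ltnNge leq_addr.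
  - by rewrite !gnE1 // => /val_inj/(bij_inj fbij).
have gsurj : forall j : 'I_(size u'), exists o, j = g o.
  move=> j; have [gf fg gfK] := fbij.
  case: (ltnP j k.+1) => Hj.
    have Hj' : j < (size (nseq k (Read, x) ++ v)).+1.
      by rewrite size_cat size_nseq ltnS; apply: leq_trans (leq_addr _ _); rewrite -ltnS.
    exists (gf (inord j)); apply: val_inj => /=; rewrite gval.
    have E : (f (gf (inord j)) : nat) = j by rewrite gfK inordK.
    rewrite gnE1 ?E //; apply: B; by rewrite E.
  have [gf' fg' gfK'] := f'bij.
  have Hl : j - k.+1 < size w.
    by rewrite ltn_subLR // addSn -Nsz.
  exists (val (gf' (Ordinal Hl))); apply: val_inj => /=.
  by rewrite gval gnE2 gfK' /= subnKC.
exists g; split.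
  apply: inj_card_bij => //.
  rewrite -(card_codom ginj); apply: subset_leq_card; apply/subsetP => j _.
  by apply/codomP; apply: gsurj.
split.
  move=> o; rewrite gval; case: (boolP (P o)) => Ho.
    rewrite -[o]/(val (exist _ o Ho : op (hremove h x))) gnE2 /u' nth_post.
    by rewrite (f'lab (exist _ o Ho)).
  rewrite gnE1 // nth_pre ?A // -(flab o) nth_pre ?A //.
move=> o1 o2 H; rewrite !gval.
case: (boolP (P o1)) => H1; case: (boolP (P o2)) => H2.
- rewrite -[o1]/(val (exist _ o1 H1 : op (hremove h x))).
  rewrite -[o2]/(val (exist _ o2 H2 : op (hremove h x))) !gnE2.
  rewrite ltn_add2l; exact: f'hb.
- exfalso; have := fhb _ _ H; have := A _ H2.
  case: (boolP (f o1 < k.+1)) => [/B|]; first by rewrite H1.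
  rewrite -leqNgt => Hle Hlt Hlt2.
  by have := ltn_trans Hlt2 Hlt; rewrite ltnS leqNgt Hle.
- rewrite -[o2]/(val (exist _ o2 H2 : op (hremove h x))) gnE2 gnE1 //.
  by apply: leq_trans (A _ H1) _; rewrite leq_addr.
- by rewrite !gnE1 //; exact: fhb.
Qed.
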